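(* Let $T$ be a simple tree of maximum degree $\Delta$, let $k\ge\Delta$, and let $f$ be a covering projection from a graph $G$ to $T^{(k)}$. If $G$ contains a cycle of length 4 as a subgraph, then for at least one of the two pairs of opposite edges of this 4-cycle, both edges of the pair are mapped by $f$ onto semi-edges.
   Context: A graph is a triple $(V,\Lambda,\iota)$ where $V$ is a set of vertices, $\Lambda=E\cup L\cup S$ is a set of links partitioned into edges, loops and semi-edges, and $\iota$ assigns to each edge a 2-element subset of $V$ and to each loop or semi-edge a single vertex. A covering projection from $G$ to $H$ is a map $f:V_G\cup\Lambda_G\to V_H\cup\Lambda_H$ sending vertices to vertices and links to links such that: for every edge $e$ of $H$ with end-vertices $u,v$, $f^{-1}(e)$ is a perfect matching between $f^{-1}(u)$ and $f^{-1}(v)$; for every loop $l$ of $H$ at $u$, $f^{-1}(l)$ is a disjoint union of cycles spanning $f^{-1}(u)$; for every semi-edge $s$ of $H$ at $u$, $f^{-1}(s)$ is a disjoint union of edges and semi-edges spanning $f^{-1}(u)$. For a simple tree $T$ of maximum degree $\Delta$ and $k\ge\Delta$, $T^{(k)}$ denotes the $k$-regular graph obtained from $T$ by attaching $k-\deg_T(u)$ semi-edges to each vertex $u$. *)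

(* Defs.v *)
From mathcomp Require Import all_boot.
Set Implicit Arguments. Unset Strict Implicit. Unset Printing Implicit Defensive.

Inductive lkind := Edge | Loop | Semi.

Definition is_edge k := if k is Edge then true else false.
Definition is_loop k := if k is Loop then true else false.
Definition is_semi k := if k is Semi then true else false.

(** A (finite) graph (V, Lambda, iota): [gkind] gives the partition of the
    links into edges / loops / semi-edges, [gends] is iota. *)
Record graph := Graph {
  gV : finType;
  gL : finType;
  gkind : gL -> lkind;
  gends : gL -> {set gV} }.

Definition graph_wf (G : graph) : Prop :=
  forall l : gL G, #|gends l| = (if is_edge (gkind l) then 2 else 1).

Definition sdeg (G : graph) (S : pred (gL G)) (a : gV G) : nat :=
  #|[set x | S x & (a \in gends x) && ~~ is_loop (gkind x)]|
  + 2 * #|[set x | S x & (a \in gends x) && is_loop (gkind x)]|.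

Definition covering (G H : graph) (fV : gV G -> gV H) (fL : gL G -> gL H)
  : Prop :=
  forall l : gL H,
  match gkind l with
  | Edge =>
      (* f^{-1}(l) is a perfect matching between f^{-1}(u) and f^{-1}(v) *)
      (forall x, fL x = l -> gkind x = Edge /\ fV @: gends x = gends l) /\
      (forall a, fV a \in gends l ->
         #|[set x | (fL x == l) && (a \in gends x)]| = 1)
  | Loop =>
      (* f^{-1}(l) is a disjoint union of cycles spanning f^{-1}(u):
         a 2-regular spanning subgraph of edges/loops on f^{-1}(u) *)
      (forall x, fL x = l -> gkind x <> Semi /\ fV @: gends x = gends l) /\
      (forall a, fV a \in gends l -> sdeg (fun x => fL x == l) a = 2)
  | Semi =>
      (* f^{-1}(l) is a disjoint union of edges and semi-edges spanning
         f^{-1}(u) *)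
      (forall x, fL x = l -> gkind x <> Loop /\ fV @: gends x = gends l) /\
      (forall a, fV a \in gends l ->
         #|[set x | (fL x == l) && (a \in gends x)]| = 1)
  end.

Definition simple_tree (V : finType) (adj : rel V) : Prop :=
  [/\ symmetric adj, irreflexive adj, #|V| > 0,
      (forall x y, connect adj x y) &
      (forall p : seq V, 3 <= size p -> ~ ucycle adj p)].

Definition tdeg (V : finType) (adj : rel V) (v : V) : nat :=
  #|[set w | adj v w]|.

Definition max_deg (V : finType) (adj : rel V) : nat :=
  \max_(v : V) tdeg adj v.

(** The graph T^(k): the edges of T plus k - deg(v) semi-edges at each v. *)
Definition tree_edges (V : finType) (adj : rel V) :=
  {e : {set V} | [exists x, exists y, adj x y && (e == [set x; y])]}.

Definition tree_semis (V : finType) (adj : rel V) (k : nat) :=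
  {p : V * 'I_k | (p.2 : nat) < k - tdeg adj p.1}.

Definition Tk (V : finType) (adj : rel V) (k : nat) : graph :=
  @Graph V (tree_edges adj + tree_semis adj k)%type
    (fun l => match l with inl _ => Edge | inr _ => Semi end)
    (fun l => match l with inl e => val e | inr p => [set (val p).1] end).

Definition C4_in (G : graph) (v0 v1 v2 v3 : gV G) (e0 e1 e2 e3 : gL G)
  : Prop :=
  [/\ uniq [:: v0; v1; v2; v3],
      gkind e0 = Edge /\ gends e0 = [set v0; v1],
      gkind e1 = Edge /\ gends e1 = [set v1; v2],
      gkind e2 = Edge /\ gends e2 = [set v2; v3] &
      gkind e3 = Edge /\ gends e3 = [set v3; v0]].

(* Main.v *)
Require Import Defs.
From mathcomp Require Import all_boot.

Lemma set2_eq (T : finType) (a b x y : T) :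
  [set a; b] = [set x; y] -> (a = x /\ b = y) \/ (a = y /\ b = x).
Proof.
move=> E.
have ha : a \in [set x; y] by rewrite -E !inE eqxx.
have hb : b \in [set x; y] by rewrite -E !inE eqxx orbT.
have hx : x \in [set a; b] by rewrite E !inE eqxx.
have hy : y \in [set a; b] by rewrite E !inE eqxx orbT.
move: ha hb hx hy; rewrite !inE.
by move=> /orP[]/eqP ha /orP[]/eqP hb /orP[]/eqP hx /orP[]/eqP hy; subst; auto.
Qed.

Section S.
Variables (V : finType) (adj : rel V) (k : nat) (G : graph)
  (fV : gV G -> gV (Tk adj k)) (fL : gL G -> gL (Tk adj k)).
Hypothesis H : covering fV fL.

Lemma cov_img x : fV @: gends x = gends (fL x).
Proof.
have := H (fL x).
case E: (fL x) => [e|p] /=; case => /(_ x E) [_ ->] _ //.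
Qed.

Lemma cov_uniq x y a : x != y -> a \in gends x -> a \in gends y ->
  fL x = fL y -> False.
Proof.
move=> nxy ax ay exy.
have Hi : fV a \in gends (fL x) by rewrite -cov_img; apply/imsetP; exists a.
have := H (fL x).
case E: (fL x) Hi => [e|p] /= Hi [_ /(_ a Hi) C].
- have : [set x; y] \subset [set z | (fL z == inl e) && (a \in gends z)].
    apply/subsetP => z; rewrite !inE => /orP [] /eqP ->; rewrite ?ax ?ay -?exy E eqxx //.
  move/subset_leq_card; rewrite C cards2 nxy //.
- have : [set x; y] \subset [set z | (fL z == inr p) && (a \in gends z)].
    apply/subsetP => z; rewrite !inE => /orP [] /eqP ->; rewrite ?ax ?ay -?exy E eqxx //.
  move/subset_leq_card; rewrite C cards2 nxy //.
Qed.

Hypothesis Hsym : symmetric adj.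

Lemma step x a b : gends x = [set a; b] ->
  (gkind (fL x) = Semi /\ fV a = fV b) \/
  (gkind (fL x) = Edge /\ adj (fV a) (fV b) /\
     exists E, fL x = inl E /\ val E = [set fV a; fV b]).
Proof.
move=> hx.
have I := cov_img x.
rewrite hx imsetU1 imset_set1 in I.
case E: (fL x) I => [e|p] /= I.
- right; split => //; split; last by exists e.
  have /existsP [x' /existsP [y' /andP [Ha /eqP He]]] := valP e.
  case: (@set2_eq V _ _ _ _ (etrans I He)) => [[-> ->]|[-> ->]] //.
  by rewrite Hsym.
- left; split => //.
  have h1 : fV a \in [set (val p).1] by rewrite -I !inE eqxx.
  have h2 : fV b \in [set (val p).1] by rewrite -I !inE eqxx orbT.
  by move: h1 h2; rewrite !inE => /eqP -> /eqP ->.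
Qed.

End S.

Ltac samel U fL :=
  match goal with
  | q1 : fL ?x = inl ?E1, q2 : fL ?y = inl ?E2,
    nxy : is_true (?x != ?y),
    ix : is_true (in_mem ?v (mem (pred_of_set.body (gends ?x)))), iy : is_true (in_mem ?v (mem (pred_of_set.body (gends ?y)))) |- _ =>
      apply: (U x y v nxy ix iy); rewrite q1 q2; congr inl; apply: val_inj;
      match goal with r1 : _ = [set _; _] |- _ => 
      match type of r1 with context [E1] =>
      match goal with r2 : _ = [set _; _] |- _ => 
      match type of r2 with context [E2] =>
      apply: (etrans r1); apply: (etrans _ (esym r2)); by [|rewrite setUC]
      end end end end
  end.

Theorem mainTheorem3 (V : finType) (adj : rel V) (k : nat)
  (G : graph) (fV : gV G -> gV (Tk adj k)) (fL : gL G -> gL (Tk adj k))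
  (v0 v1 v2 v3 : gV G) (e0 e1 e2 e3 : gL G) :
  simple_tree adj -> max_deg adj <= k ->
  graph_wf G -> covering fV fL ->
  C4_in v0 v1 v2 v3 e0 e1 e2 e3 ->
  (gkind (fL e0) = Semi /\ gkind (fL e2) = Semi) \/
  (gkind (fL e1) = Semi /\ gkind (fL e3) = Semi).
Proof.
move=> [Hsym Hirr _ _ Hcyc] _ _ Hc [Hu [_ g0] [_ g1] [_ g2] [_ g3]].
move: Hu; rewrite /= !inE !negb_or => /and4P [/and3P [n01 n02 n03] /andP [n12 n13] n23 _].
have ne01 : e0 != e1.
  by apply/eqP => E; move: g1; rewrite -E g0 => /set2_eq [[? ?]|[? ?]]; subst; rewrite ?eqxx in n01 n02 n03 n12 n13 n23.
have ne12 : e1 != e2.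
  by apply/eqP => E; move: g2; rewrite -E g1 => /set2_eq [[? ?]|[? ?]]; subst; rewrite ?eqxx in n01 n02 n03 n12 n13 n23.
have ne23 : e2 != e3.
  by apply/eqP => E; move: g3; rewrite -E g2 => /set2_eq [[? ?]|[? ?]]; subst; rewrite ?eqxx in n01 n02 n03 n12 n13 n23.
have ne30 : e3 != e0.
  by apply/eqP => E; move: g0; rewrite -E g3 => /set2_eq [[? ?]|[? ?]]; subst; rewrite ?eqxx in n01 n02 n03 n12 n13 n23.
have i0 : v1 \in gends e0 by rewrite g0 !inE eqxx orbT.
have i1 : v1 \in gends e1 by rewrite g1 !inE eqxx.
have j1 : v2 \in gends e1 by rewrite g1 !inE eqxx orbT.
have j2 : v2 \in gends e2 by rewrite g2 !inE eqxx.
have k2 : v3 \in gends e2 by rewrite g2 !inE eqxx orbT.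
have k3 : v3 \in gends e3 by rewrite g3 !inE eqxx.
have l3 : v0 \in gends e3 by rewrite g3 !inE eqxx orbT.
have l0 : v0 \in gends e0 by rewrite g0 !inE eqxx.
have U := @cov_uniq _ _ _ _ _ _ Hc.
have tri : forall a b c : V, adj a b -> adj b c -> adj c a -> False.
  move=> a b c ab bc ca; apply: (Hcyc [:: a; b; c]) => //.
  have nab : a != b by apply/eqP=> E; rewrite E Hirr in ab.
  have nbc : b != c by apply/eqP=> E; rewrite E Hirr in bc.
  have nca : c != a by apply/eqP=> E; rewrite E Hirr in ca.
  by rewrite /ucycle /= ab bc ca /= !inE !negb_or nab nbc eq_sym nca.
have quad : forall a b c d : V, adj a b -> adj b c -> adj c d -> adj d a ->
    a != c -> b != d -> False.
  move=> a b c d ab bc cd da nac nbd; apply: (Hcyc [:: a; b; c; d]) => //.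
  have nab : a != b by apply/eqP=> E; rewrite E Hirr in ab.
  have nbc : b != c by apply/eqP=> E; rewrite E Hirr in bc.
  have ncd : c != d by apply/eqP=> E; rewrite E Hirr in cd.
  have nda : d != a by apply/eqP=> E; rewrite E Hirr in da.
  by rewrite /ucycle /= ab bc cd da /= !inE !negb_or nab nbc ncd nac nbd (eq_sym a d) nda.
have S0 := @step _ _ _ _ _ _ Hc Hsym _ _ _ g0.
have S1 := @step _ _ _ _ _ _ Hc Hsym _ _ _ g1.
have S2 := @step _ _ _ _ _ _ Hc Hsym _ _ _ g2.
have S3 := @step _ _ _ _ _ _ Hc Hsym _ _ _ g3.
move: S0 S1 S2 S3.
move: (fV v0) (fV v1) (fV v2) (fV v3) => w0 w1 w2 w3.
case=> [[s0 w01]|[s0 [a01 [E0 [q0 r0]]]]];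
case=> [[s1 w12]|[s1 [a12 [E1 [q1 r1]]]]];
case=> [[s2 w23]|[s2 [a23 [E2 [q2 r2]]]]];
case=> [[s3 w30]|[s3 [a30 [E3 [q3 r3]]]]];
(try by [left | right]); exfalso; subst;
  first
  [ match goal with H1: is_true (adj ?a ?b), H2: is_true (adj ?b ?c), H3: is_true (adj ?c ?a) |- _ =>
      exact (tri _ _ _ H1 H2 H3) end
  | samel U fL
  | match goal with H1: is_true (adj ?a ?b), H2: is_true (adj ?b ?c), H3: is_true (adj ?c ?d), H4: is_true (adj ?d ?a) |- _ =>
      apply: (quad _ _ _ _ H1 H2 H3 H4); apply/eqP => ?; subst; samel U fL end ].
Qed.
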